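(* Let $X,Y,Z$ be random variables on finite alphabets $\mathcal{X},\mathcal{Y},\mathcal{Z}$, and let $\operatorname{Un}(X\to Z\mid Y)$ be the unique information defined below. Then $\operatorname{Un}(X\to Z\mid Y)\le I(X;Z)$.
   Context: For each $y\in\mathcal{Y}$ with $\Pr(Y=y)>0$, let $(A_y,B_y,C_y)$ be the random triple on $\mathcal{X}\times\mathcal{Y}\times\mathcal{Z}$ with $\Pr(A_y=x,B_y=y',C_y=z)=0$ if $\Pr(Z=z)=0$ and $\Pr(A_y=x,B_y=y',C_y=z)=\Pr(X=x,Y=y',Z=z)\Pr(Z=z\mid Y=y)/\Pr(Z=z)$ otherwise. The unique information is $\operatorname{Un}(X\to Z\mid Y)=\sum_{y:\Pr(Y=y)>0}\Pr(Y=y)\,I(A_y;C_y)$, where $I$ is mutual information. *)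

(* Defs.v *)
From HB Require Import structures.
From mathcomp Require Import all_boot all_order all_algebra.
From mathcomp Require Import reals exp.
Set Implicit Arguments.
Unset Strict Implicit.
Unset Printing Implicit Defensive.
Import Order.TTheory GRing.Theory Num.Theory.
Local Open Scope ring_scope.

Section InfoDefs.
Variable R : realType.

Definition is_pmf (T : finType) (P : T -> R) : Prop :=
  (forall t, 0 <= P t) /\ \sum_t P t = 1.

(* Mutual information (natural log) of a pair with joint pmf [Q] on A x B,
   convention 0 log 0 = 0: the sum ranges over the support of Q. *)
Definition mutual_info (A B : finType) (Q : A -> B -> R) : R :=
  let QA := fun a => \sum_b Q a b in
  let QB := fun b => \sum_a Q a b in
  \sum_a \sum_(b | Q a b != 0) Q a b * ln (Q a b / (QA a * QB b)).

Variables (X Y Z : finType).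

Definition margY (P : X -> Y -> Z -> R) (y : Y) : R :=
  \sum_x \sum_z P x y z.
Definition margZ (P : X -> Y -> Z -> R) (z : Z) : R :=
  \sum_x \sum_y P x y z.
Definition margYZ (P : X -> Y -> Z -> R) (y : Y) (z : Z) : R :=
  \sum_x P x y z.
Definition margXZ (P : X -> Y -> Z -> R) (x : X) (z : Z) : R :=
  \sum_y P x y z.

Definition condZY (P : X -> Y -> Z -> R) (y : Y) (z : Z) : R :=
  margYZ P y z / margY P y.

(* The law of the triple (A_y, B_y, C_y). *)
Definition tripleY (P : X -> Y -> Z -> R) (y : Y) : X -> Y -> Z -> R :=
  fun x y' z => if margZ P z == 0 then 0
                else P x y' z * condZY P y z / margZ P z.

Definition IAC (P : X -> Y -> Z -> R) (y : Y) : R :=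
  mutual_info (margXZ (tripleY P y)).

Definition unique_info (P : X -> Y -> Z -> R) : R :=
  \sum_(y | 0 < margY P y) margY P y * IAC P y.

Definition IXZ (P : X -> Y -> Z -> R) : R := mutual_info (margXZ P).

End InfoDefs.

(* Main.v *)
Require Import Defs.
From HB Require Import structures.
From mathcomp Require Import all_boot all_order all_algebra.
From mathcomp Require Import reals exp.
From mathcomp Require Import ring lra.
Set Implicit Arguments.
Unset Strict Implicit.
Unset Printing Implicit Defensive.
Import Order.TTheory GRing.Theory Num.Theory.
Local Open Scope ring_scope.

Section Aux.
Variable R : realType.

Lemma le_sum1 (I : finType) (F : I -> R) i :
  (forall j, 0 <= F j) -> F i <= \sum_j F j.
Proof.
move=> F0; rewrite (bigD1 i) //= lerDl; exact: sumr_ge0.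
Qed.

Lemma ln_le_sub1 (x : R) : 0 < x -> ln x <= x - 1.
Proof.
move=> x0; have := @le_ln1Dx R (x - 1).
rewrite addrCA subrr addr0; apply; lra.
Qed.

Lemma aux_ineq (py Q L1 L2 a : R) :
  py * Q * L2 <= py * Q * (a - 1) ->
  py * (Q * (L1 + L2)) <= py * Q * L1 + py * (Q * a - Q).
Proof.
move=> h.
have e1 : py * (Q * (L1 + L2)) = py * Q * L1 + py * Q * L2 by ring.
have e2 : py * Q * (a - 1) = py * (Q * a - Q) by ring.
by rewrite e1 lerD2l -e2.
Qed.

Variables (X Y Z : finType) (P : X -> Y -> Z -> R).
Hypothesis P0 : forall x y z, 0 <= P x y z.
Hypothesis P1 : \sum_x \sum_y \sum_z P x y z = 1.

Lemma pxz0 x z : 0 <= margXZ P x z. Proof. exact: sumr_ge0. Qed.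
Lemma pyz0 y z : 0 <= margYZ P y z. Proof. exact: sumr_ge0. Qed.
Lemma pz0 z : 0 <= margZ P z.
Proof. apply: sumr_ge0 => x _; exact: sumr_ge0. Qed.
Lemma py0 y : 0 <= margY P y.
Proof. apply: sumr_ge0 => x _; exact: sumr_ge0. Qed.

Lemma pyE y : margY P y = \sum_z margYZ P y z.
Proof. by rewrite /margY /margYZ exchange_big. Qed.
Lemma pzE z : margZ P z = \sum_y margYZ P y z.
Proof. by rewrite /margZ /margYZ exchange_big. Qed.
Lemma pzE' z : margZ P z = \sum_x margXZ P x z.
Proof. by []. Qed.

Lemma pxz_le x z : margXZ P x z <= margZ P z.
Proof. rewrite pzE'; apply: (@le_sum1 _ (fun j => margXZ P j z)) => j; exact: pxz0. Qed.
Lemma pyz_le y z : margYZ P y z <= margY P y.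
Proof. rewrite pyE; apply: (@le_sum1 _ (fun j => margYZ P y j)) => j; exact: pyz0. Qed.
Lemma pxz_lepx x z : margXZ P x z <= \sum_z' margXZ P x z'.
Proof. apply: (@le_sum1 _ (fun j => margXZ P x j)) => j; exact: pxz0. Qed.

Lemma sum_px : \sum_x \sum_z margXZ P x z = 1.
Proof.
rewrite -P1; apply: eq_bigr => x _; rewrite /margXZ; exact: exchange_big.
Qed.

Lemma QE y x z : margXZ (tripleY P y) x z
  = margXZ P x z * condZY P y z / margZ P z.
Proof.
rewrite /margXZ /tripleY; case: eqP => h.
  by rewrite big1 // h invr0 mulr0.
by rewrite -!big_distrl.
Qed.


Definition LL x z := ln (margXZ P x z / ((\sum_b margXZ P x b) * (\sum_a margXZ P a z))).
Definition WW y x z := margXZ P x z * margYZ P y z / margZ P z.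

Lemma drop_filter (I : finType) (Q F : I -> R) :
  \sum_(i | Q i != 0) Q i * F i = \sum_i Q i * F i.
Proof.
rewrite big_mkcond; apply: eq_bigr => i _; case: eqP => // ->; by rewrite mul0r.
Qed.

Lemma pyz_lez y z : margYZ P y z <= margZ P z.
Proof. rewrite pzE; apply: (@le_sum1 _ (fun j => margYZ P j z)) => j; exact: pyz0. Qed.

Lemma per_y y : 0 < margY P y ->
  margY P y * IAC P y <= \sum_x \sum_z WW y x z * LL x z.
Proof.
move=> py_gt0.
rewrite /IAC /mutual_info /=.
set Q := margXZ (tripleY P y).
set py := margY P y.
have pyn0 : py != 0 by rewrite gt_eqF.
have hQ x z : Q x z = margXZ P x z * condZY P y z / margZ P z by exact: QE.
have c0 z : 0 <= condZY P y z.
  by rewrite /condZY; apply: divr_ge0; [exact: pyz0 | exact: py0].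
have hQ0 x z : 0 <= Q x z.
  by rewrite hQ; apply: divr_ge0; [apply: mulr_ge0 => //; exact: pxz0 | exact: pz0].
have hqB z : \sum_a Q a z = condZY P y z.
  under eq_bigr => a _ do rewrite hQ.
  rewrite -!big_distrl /= -pzE'.
  have [pz_eq0|pzn0] := eqVneq (margZ P z) 0.
    have : margYZ P y z = 0.
      by apply/eqP; rewrite eq_le pyz0 andbT -pz_eq0 pyz_lez.
    by move=> h; rewrite /condZY h pz_eq0 !mul0r.
  by rewrite mulrAC divff // mul1r.
have hW x z : WW y x z = py * Q x z.
  rewrite hQ /WW /condZY -/py.
  set ip := (margZ P z)^-1.
  rewrite /= mulrA -[margXZ P x z * margYZ P y z / margZ P z]/(margXZ P x z * margYZ P y z * ip).
  by field.
have term x z : py * (Q x z * ln (Q x z / ((\sum_b Q x b) * \sum_a Q a z)))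
    <= WW y x z * LL x z
       + py * (Q x z * ((\sum_z' margXZ P x z') / (\sum_b Q x b)) - Q x z).
  rewrite hW.
  have [->|Qn0] := eqVneq (Q x z) 0.
    by rewrite !(mul0r, mulr0, subrr, addr0).
  have Qp : 0 < Q x z by rewrite lt0r Qn0 hQ0.
  have Qn0v := Qn0; rewrite hQ !mulf_eq0 !invr_eq0 in Qn0v.
  case/norP: Qn0v => /norP [hxz hc] hz.
  have pxzp : 0 < margXZ P x z by rewrite lt0r hxz pxz0.
  have cp : 0 < condZY P y z.
    rewrite lt0r c0 andbT; apply: contraNneq Qn0 => h.
    by rewrite hQ h mulr0 mul0r.
  have pzp : 0 < margZ P z by rewrite lt0r hz pz0.
  set qA := \sum_b Q x b.
  have qAp : 0 < qA.
    by apply: (lt_le_trans Qp); apply: (@le_sum1 _ (fun j => Q x j)) => j.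
  set px := \sum_z' margXZ P x z'.
  have pxp : 0 < px by apply: (lt_le_trans pxzp); exact: pxz_lepx.
  rewrite hqB /LL -pzE' -/px.
  have -> : Q x z / (qA * condZY P y z)
      = (margXZ P x z / (px * margZ P z)) * (px / qA).
    rewrite hQ; field.
    by rewrite !gt_eqF.
  rewrite lnM ?posrE; last 2 first.
  - by apply: divr_gt0 => //; exact: mulr_gt0.
  - exact: divr_gt0.
  have hl := ln_le_sub1 (divr_gt0 pxp qAp).
  have := ler_wpM2l (mulr_ge0 (ltW py_gt0) (ltW Qp)) hl.
  set L1 := ln (_ / (_ * _)).
  set L2 := ln (_ / _).
  set a := px / qA.
  move=> h; exact: aux_ineq h.
under eq_bigr => a _ do rewrite drop_filter.
rewrite mulr_sumr.
have hqA1 : \sum_x \sum_z Q x z = 1.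
  rewrite exchange_big /=.
  under eq_bigr => z _ do rewrite hqB /condZY.
  by rewrite -big_distrl /= -pyE divff.
apply: (le_trans (y := \sum_x \sum_z (WW y x z * LL x z
   + py * (Q x z * ((\sum_z' margXZ P x z') / (\sum_b Q x b)) - Q x z)))).
  apply: ler_sum => x _; rewrite mulr_sumr; apply: ler_sum => z _; exact: term.
rewrite (eq_bigr _ (fun x _ => big_split _ _ _ _ _)) /=.
rewrite big_split /= gerDl.
apply: (le_trans (y := \sum_x py * ((\sum_z' margXZ P x z') - \sum_z Q x z))).
  apply: ler_sum => x _.
  rewrite -mulr_sumr sumrB -big_distrl /=.
  apply: ler_wpM2l; first exact: ltW.
  rewrite lerD2r.
  set qA := \sum_b Q x b.
  have [->|qAn0] := eqVneq qA 0; first by rewrite mul0r; apply: sumr_ge0 => z _; exact: pxz0.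
  by rewrite mulrCA divff // mulr1.
by rewrite -mulr_sumr sumrB sum_px hqA1 subrr mulr0.
Qed.
Lemma sumWW x z : \sum_y WW y x z = margXZ P x z.
Proof.
rewrite /WW -big_distrl -mulr_sumr /= -pzE.
have [pz_eq0|pzn0] := eqVneq (margZ P z) 0.
  have : margXZ P x z = 0.
    by apply/eqP; rewrite eq_le pxz0 andbT -pz_eq0 pxz_le.
  by move=> ->; rewrite !mul0r.
by rewrite -mulrA divff // mulr1.
Qed.

Lemma main_ineq : unique_info P <= IXZ P.
Proof.
rewrite /unique_info.
apply: (le_trans (y := \sum_(y | 0 < margY P y) \sum_x \sum_z WW y x z * LL x z)).
  apply: ler_sum => y hy; exact: per_y.
have -> : \sum_(y | 0 < margY P y) \sum_x \sum_z WW y x z * LL x z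
        = \sum_y \sum_x \sum_z WW y x z * LL x z.
  rewrite [RHS](bigID (fun y => 0 < margY P y)) /=.
  rewrite [X in _ = _ + X]big1 ?addr0 // => y hy.
  have py_eq0 : margY P y = 0.
    by apply/eqP; rewrite eq_le py0 andbT leNgt.
  apply: big1 => x _; apply: big1 => z _.
  have : margYZ P y z = 0.
    by apply/eqP; rewrite eq_le pyz0 andbT -py_eq0 pyz_le.
  by rewrite /WW => ->; rewrite mulr0 !mul0r.
rewrite exchange_big /=.
under eq_bigr => x _ do rewrite exchange_big /=.
under eq_bigr => x _ do under eq_bigr => z _ do rewrite -big_distrl /= sumWW.
rewrite /IXZ /mutual_info /=.
under [X in _ <= X]eq_bigr => x _ do rewrite drop_filter.
by [].
Qed.
End Aux.

Theorem lemma4 (R : realType) (X Y Z : finType) (P : X -> Y -> Z -> R)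
  (hP : is_pmf (fun t : X * Y * Z => P t.1.1 t.1.2 t.2)) :
  unique_info P <= IXZ P.
Proof.
case: hP => h0 h1.
apply: main_ineq.
  by move=> x y z; exact: (h0 (x, y, z)).
rewrite -h1 pair_bigA /= pair_bigA /=.
by [].
Qed.
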